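(* Let $f:2^V\to\mathbb{R}_+$ be nonnegative, normalized ($f(\emptyset)=0$), supermodular and monotone, and let $r,k$ be integers with $1\le r\le k\le n-1$. Run batch-greedy augmenting: $T_0=\emptyset$, $t=\lfloor k/r\rfloor$; for $i=1,\dots,t$, let $\mathcal{R}_i$ be the set of $r$-element subsets of $V\setminus T_{i-1}$, choose $S_i\in\arg\max_{S\in\mathcal{R}_i}f(T_{i-1}\cup S)$ and set $T_i=T_{i-1}\cup S_i$. Then for any $t$ pairwise disjoint $r$-element subsets $U_1,\dots,U_t$ of $V$, $f(T_t)\ge\frac12\sum_{h=1}^t f(U_h)$.
   Context: $V$ is a finite set with $n=|V|$. Supermodular: $f(A)+f(B)\le f(A\cup B)+f(A\cap B)$; monotone: $f(B)\le f(A)$ for $B\subseteq A$. *)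

(* Defs.v *)
From HB Require Import structures.
From mathcomp Require Import all_boot all_order all_algebra.
Set Implicit Arguments. Unset Strict Implicit. Unset Printing Implicit Defensive.
Import Order.TTheory GRing.Theory Num.Theory.
Local Open Scope ring_scope.

Definition supermodular (R : realFieldType) (V : finType) (f : {set V} -> R) :=
  forall A B : {set V}, f A + f B <= f (A :|: B) + f (A :&: B).

Definition monotone (R : realFieldType) (V : finType) (f : {set V} -> R) :=
  forall A B : {set V}, B \subset A -> f B <= f A.

Definition batch_greedy_run (R : realFieldType) (V : finType)
    (f : {set V} -> R) (r t : nat) (T : nat -> {set V}) :=
  T 0%N = set0 /\
  forall i : nat, (1 <= i <= t)%N ->
    exists S : {set V},
      [/\ S \subset ~: T i.-1, #|S| = r, T i = T i.-1 :|: S &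
          forall S' : {set V}, S' \subset ~: T i.-1 -> #|S'| = r ->
            f (T i.-1 :|: S') <= f (T i.-1 :|: S)].

(* Main.v *)
Require Import Defs.
From HB Require Import structures.
From mathcomp Require Import all_boot all_order all_algebra.
From mathcomp Require Import lra zify.
Import Order.TTheory GRing.Theory Num.Theory.
Local Open Scope ring_scope.

Lemma pad (V : finType) (A B : {set V}) (r : nat) :
  A \subset B -> (#|A| <= r)%N -> (r <= #|B|)%N ->
  exists C : {set V}, [/\ A \subset C, C \subset B & #|C| = r].
Proof.
move=> sAB hA hB.
have [n hn] : exists n, #|B| = (r + n)%N by exists (#|B| - r)%N; lia.
elim: n B sAB hB hn => [|n IH] B sAB hB hn.
  by exists B; split => //; lia.
have : B :\: A != set0.
  rewrite setD_eq0; apply/negP => sBA.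
  have := subset_leq_card sBA; lia.
case/set0Pn => x; rewrite inE => /andP [xA xB].
have [|||C [h1 h2 h3]] := IH (B :\ x).
- apply/subsetP => y yA; rewrite !inE; apply/andP; split.
    by apply/eqP => exy; rewrite -exy yA in xA.
  exact: (subsetP sAB).
- have := cardsD1 x B; rewrite xB; lia.
- have := cardsD1 x B; rewrite xB; lia.
exists C; split => //; apply: subset_trans h2 _; exact: subsetDl.
Qed.

Lemma superadd (R : realFieldType) (V : finType) (f : {set V} -> R)
  (I : eqType) (X : I -> {set V}) (s : seq I) :
  f set0 = 0 -> supermodular f -> uniq s ->
  (forall i j, i != j -> [disjoint X i & X j]) ->
  \sum_(i <- s) f (X i) <= f (\bigcup_(i <- s) X i).
Proof.
move=> f0 sm + dis; elim: s => [|a s IH] /=.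
  by rewrite !big_nil f0.
case/andP => aNs us; rewrite !big_cons.
have d : X a :&: \bigcup_(i <- s) X i = set0.
  apply/eqP; rewrite setI_eq0 -setI_eq0 big_distrr /=.
  rewrite big_seq_cond; apply/eqP/big1 => i /andP [iS _].
  apply/eqP; rewrite setI_eq0; apply: dis.
  by apply/eqP => e; rewrite e iS in aNs.
have := sm (X a) (\bigcup_(i <- s) X i); rewrite d f0 addr0.
have := IH us; lra.
Qed.

Theorem lemma2 (R : realFieldType) (V : finType) (f : {set V} -> R)
    (r k : nat) (T : nat -> {set V}) (U : 'I_(k %/ r) -> {set V}) :
  (forall A, 0 <= f A) ->
  f set0 = 0 ->
  supermodular f ->
  monotone f ->
  (1 <= r)%N -> (r <= k)%N -> (k <= #|V|.-1)%N ->
  batch_greedy_run f r (k %/ r) T ->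
  (forall h, #|U h| = r) ->
  (forall h1 h2, h1 != h2 -> [disjoint U h1 & U h2]) ->
  f (T (k %/ r)%N) >= 2^-1 * \sum_(h < k %/ r) f (U h).
Proof.
move=> f_ge0 f0 sm mono r1 rk kn [T0 step] Ucard Udis.
set t := (k %/ r)%N in U step Udis Ucard *.
have tr : (t * r <= k)%N by apply: leq_trunc_div.
have cardT : forall i, (i <= t)%N -> (#|T i| <= i * r)%N.
  elim=> [|i IH] hi; first by rewrite T0 cards0.
  have [|S [_ cS -> _]] := step i.+1; first by rewrite hi.
  have := leq_card_setU (T i) S; case=> le _.
  have := IH (ltnW hi); rewrite /= in le *; rewrite mulSn; lia.
have monoT : forall i j, (i <= j <= t)%N -> T i \subset T j.
  move=> i; elim=> [|j IH].
    by rewrite leqn0 => /andP [/eqP -> _].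
  case/andP; rewrite leq_eqVlt => /orP [/eqP -> //|lt] jt.
  apply: subset_trans (IH _) _; first by rewrite -ltnS lt /= ltnW.
  have [|S [_ _ -> _]] := step j.+1; first by rewrite jt.
  exact: subsetUl.
have gain : forall i : 'I_t,
    f (U i) - f (T t :&: U i) <= f (T i.+1) - f (T i).
  move=> i.
  have [|S [sS cS -> mx]] := step i.+1; first by rewrite ltn_ord.
  rewrite /= in sS mx *.
  have ci := cardT i (ltnW (ltn_ord i)).
  have sub1 : U i :\: T i \subset ~: T i.
    by apply/subsetP => x; rewrite !inE => /andP [-> _].
  have q1 : (#|U i :\: T i| <= r)%N.
    rewrite cardsD; have := subset_leq_card (subsetIl (U i) (T i)); rewrite Ucard; lia.
  have q2 : (r <= #|~: T i|)%N.
    rewrite cardsCs setCK; have := ltn_ord i; rewrite -ltnS in kn.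
    move=> it; have : (i.+1 * r <= t * r)%N by rewrite leq_mul2r it orbT.
    rewrite mulSn; have := leq_ltn_trans kn (ltnSn _).
    have : (0 < #|V|)%N by lia.
    move=> hV; rewrite prednK //; lia.
  have [C [h1 h2 h3]] := @pad _ _ _ r sub1 q1 q2.
  have e1 := mx C h2 h3.
  have e2 : f (T i :|: U i) <= f (T i :|: C).
    apply: mono; apply/subsetP => x; rewrite !inE => /orP [->//|xU].
    case xT: (x \in T i) => //=; apply: (subsetP h1); by rewrite !inE xT xU.
  have e3 := sm (T i) (U i).
  have e4 : f (T i :&: U i) <= f (T t :&: U i).
    by apply: mono; apply: setSI; apply: monoT; rewrite /= (ltnW (ltn_ord i)) leqnn.
  lra.
have tel : \sum_(i < t) (f (T i.+1) - f (T i)) = f (T t) - f (T 0%N).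
  by rewrite -(big_mkord xpredT (fun i => f (T i.+1) - f (T i))) telescope_sumr.
have sg : \sum_(i < t) (f (U i) - f (T t :&: U i)) <= \sum_(i < t) (f (T i.+1) - f (T i)).
  by apply: ler_sum => i _; exact: gain.
rewrite sumrB tel T0 f0 subr0 in sg.
have dis' : forall i j : 'I_t, i != j -> [disjoint T t :&: U i & T t :&: U j].
  move=> i j /Udis; rewrite -!setI_eq0 => /eqP d.
  by apply/eqP; rewrite setIACA d setI0.
have sa : \sum_(i < t) f (T t :&: U i) <= f (T t).
  apply: le_trans (@superadd _ _ f _ (fun i => T t :&: U i) (index_enum 'I_t) f0 sm (index_enum_uniq _) dis') _.
  apply: mono; apply/bigcupsP => i _; exact: subsetIl.
lra.
Qed.
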